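(* Let $\mathfrak g\xrightarrow{\mu}\mathfrak h$ be a crossed module of Lie algebras, $\phi:W\to V$ linear, $\rho$ a 2-representation on $\phi$. Let $\omega\in\bigwedge^q\mathfrak g_p^*\otimes V$ and $\Xi=(\xi_0,\dots,\xi_q)\in\mathfrak g_{p+1}^{q+1}$ with $\xi_j=(x_j^0,\dots,x_j^p;y_j)$. Then $$\delta\partial\omega(\Xi)=\partial\delta\omega(\Xi)+\phi\Big(\sum_{j=0}^q(-1)^j\rho_1(x_j^0)\omega(\partial_0\Xi(j))\Big)=\partial\delta\omega(\Xi)+\Delta\delta_{(1)}\omega(\Xi).$$
   Context: Crossed module: Lie algebras $\mathfrak g,\mathfrak h$, Lie homomorphism $\mu$, action $\mathcal L:\mathfrak h\to\mathrm{Der}(\mathfrak g)$ with $\mu(\mathcal L_yx)=[y,\mu(x)]$, $\mathcal L_{\mu(x_0)}x_1=[x_0,x_1]$; $\mathfrak g\oplus_{\mathcal L}\mathfrak h$ has bracket $[(x_0,y_0),(x_1,y_1)]=([x_0,x_1]+\mathcal L_{y_0}x_1-\mathcal L_{y_1}x_0,[y_0,y_1])$. 2-representation: linear $\rho_0^1:\mathfrak h\to\mathfrak{gl}(W)$, $\rho_0^0:\mathfrak h\to\mathfrak{gl}(V)$, $\rho_1:\mathfrak g\to\mathrm{Hom}(V,W)$ with $\rho_0^1,\rho_0^0$ representations, $\phi\rho_0^1(y)=\rho_0^0(y)\phi$, $\rho_1([x_0,x_1])=\rho_1(x_0)\phi\rho_1(x_1)-\rho_1(x_1)\phi\rho_1(x_0)$,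 $\rho_0^0(\mu(x))=\phi\rho_1(x)$, $\rho_0^1(\mu(x))=\rho_1(x)\phi$, $\rho_1(\mathcal L_yx)=\rho_0^1(y)\rho_1(x)-\rho_1(x)\rho_0^0(y)$. $\mathfrak g_0=\mathfrak h$; for $p\ge1$, $\mathfrak g_p=\mathfrak g^p\oplus\mathfrak h$, elements $(x^0,\dots,x^{p-1};y)$, a Lie algebra via identification with composable strings $(a_0,\dots,a_{p-1})\in(\mathfrak g\oplus_{\mathcal L}\mathfrak h)^p$, $a_j=(x^j,y+\sum_{k>j}\mu(x^k))$, componentwise bracket. Face maps $\partial_k:\mathfrak g_{p+1}\to\mathfrak g_p$: $\partial_0(x^0,\dots,x^p;y)=(x^1,\dots,x^p;y)$, $\partial_k(\dots)=(x^0,\dots,x^{k-1}+x^k,\dots,x^p;y)$ ($0<k\le p$), $\partial_{p+1}(\dots)=(x^0,\dots,x^{p-1};y+\mu(x^p))$, applied componentwise to tuples; $\hat t_p(x^0,\dots,x^{p-1};y)=y+\sum\mu(x^j)$. $X(j),X(m,n)$: removal of entries. $C^{p,q}_0=\bigwedge^q\mathfrak g_p^*\otimes V$, $C^{p,q}_1=\bigwedge^q\mathfrak g_p^*\otimes\mathfrak g^*\otimes W$. $\delta:C^{p,q}_0\to C^{p,q+1}_0$ is the Chevalley–Eilenberg differential of $\mathfrak g_p$ with values in $V$ for the representation $\rho_0^0\circ\hat t_p$: $\delta\omega(\xi_0,\dots,\xi_q)=\sum_j(-1)^j\rho_0^0(\hat t_p(\xi_j))\omega(\Xi(j))+\sum_{m<n}(-1)^{m+n}\omega([\xi_m,\xi_n],\Xi(m,n))$.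 $\partial\omega(\Xi)=\sum_{k=0}^{p+1}(-1)^k\omega(\partial_k\Xi)$. $\delta_{(1)}:C^{p,q}_0\to C^{p,q}_1$, $\delta_{(1)}\omega(\Xi;x)=\rho_1(x)\omega(\Xi)$. $\Delta:C^{p,q}_1\to C^{p+1,q+1}_0$, $\Delta\beta(\xi_0,\dots,\xi_q)=\phi\big(\sum_j(-1)^j\beta(\partial_0\Xi(j);x_j^0)\big)$. *)

(* Defs.v *)
From HB Require Import structures.
From mathcomp Require Import all_boot all_order all_algebra.
Set Implicit Arguments. Unset Strict Implicit. Unset Printing Implicit Defensive.
Import Order.TTheory GRing.Theory Num.Theory.
Local Open Scope ring_scope.

Section LieDefs.
Variable K : fieldType.

Definition lin (U V : lmodType K) (f : U -> V) : Prop :=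
  forall (a : K) (x y : U), f (a *: x + y) = a *: f x + f y.

Definition is_lie (L : lmodType K) (br : L -> L -> L) : Prop :=
  [/\ forall z, lin (fun x => br x z),
      forall x, lin (br x),
      forall x, br x x = 0 &
      forall x y z, br x (br y z) + br y (br z x) + br z (br x y) = 0].

Definition is_lie_hom (L1 L2 : lmodType K) (br1 : L1 -> L1 -> L1)
  (br2 : L2 -> L2 -> L2) (f : L1 -> L2) : Prop :=
  lin f /\ forall x y, f (br1 x y) = br2 (f x) (f y).

Definition is_rep (h V : lmodType K) (brh : h -> h -> h) (rho : h -> V -> V) : Prop :=
  [/\ forall y, lin (rho y),
      forall v, lin (fun y => rho y v) &
      forall y y' v, rho (brh y y') v = rho y (rho y' v) - rho y' (rho y v)].

Record crossed_module (g h : lmodType K) (brg : g -> g -> g) (brh : h -> h -> h)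
  (mu : g -> h) (act : h -> g -> g) : Prop := {
  cm_lie_g : is_lie brg;
  cm_lie_h : is_lie brh;
  cm_mu : is_lie_hom brg brh mu;
  cm_act_lin : forall y, lin (act y);
  cm_act_der : forall y x0 x1, act y (brg x0 x1) = brg (act y x0) x1 + brg x0 (act y x1);
  cm_act_linh : forall x, lin (fun y => act y x);
  cm_act_hom : forall y y' x, act (brh y y') x = act y (act y' x) - act y' (act y x);
  cm_equiv : forall y x, mu (act y x) = brh y (mu x);
  cm_peiffer : forall x0 x1, act (mu x0) x1 = brg x0 x1 }.

Record two_rep (g h V W : lmodType K) (brg : g -> g -> g) (brh : h -> h -> h)
  (mu : g -> h) (act : h -> g -> g) (phi : W -> V)
  (rho01 : h -> W -> W) (rho00 : h -> V -> V) (rho1 : g -> V -> W) : Prop := {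
  tr_rho01 : is_rep brh rho01;
  tr_rho00 : is_rep brh rho00;
  tr_rho1_lin : forall x, lin (rho1 x);
  tr_rho1_linx : forall v, lin (fun x => rho1 x v);
  tr_phi_equiv : forall y w, phi (rho01 y w) = rho00 y (phi w);
  tr_rho1_br : forall x0 x1 v,
      rho1 (brg x0 x1) v = rho1 x0 (phi (rho1 x1 v)) - rho1 x1 (phi (rho1 x0 v));
  tr_mu0 : forall x v, rho00 (mu x) v = phi (rho1 x v);
  tr_mu1 : forall x w, rho01 (mu x) w = rho1 x (phi w);
  tr_act : forall y x v, rho1 (act y x) v = rho01 y (rho1 x v) - rho1 x (rho00 y v) }.

(* An element of C^{p,q}_0 = wedge^q g_p^* (x) V: a q-linear alternating map,
   represented as a function on sequences, constrained on sequences of size q. *)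
Definition is_cochain (G V : lmodType K) (q : nat) (w : seq G -> V) : Prop :=
  (forall (s1 s2 : seq G) (a : K) (u v : G), size s1 + size s2 + 1 = q ->
     w (s1 ++ (a *: u + v) :: s2) = a *: w (s1 ++ u :: s2) + w (s1 ++ v :: s2)) /\
  (forall (s1 s2 s3 : seq G) (u : G), size s1 + size s2 + size s3 + 2 = q ->
     w (s1 ++ u :: s2 ++ u :: s3) = 0).
End LieDefs.

Definition rm1 (T : Type) (j : nat) (s : seq T) : seq T :=
  [seq x.2 | x <- zip (iota 0 (size s)) s & x.1 != j].
Definition rm2 (T : Type) (m n : nat) (s : seq T) : seq T :=
  [seq x.2 | x <- zip (iota 0 (size s)) s & (x.1 != m) && (x.1 != n)].

Notation gp g h p := ({ffun 'I_p -> g} * h)%type.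

Section Simplicial.
Variables (K : fieldType) (g h : lmodType K) (brg : g -> g -> g) (brh : h -> h -> h)
  (mu : g -> h) (act : h -> g -> g).

(* x^m as a function of the natural number m (0 outside the range) *)
Definition xat (p : nat) (x : {ffun 'I_p -> g}) (m : nat) : g :=
  if @insub nat (fun k => (k < p)%N) 'I_p m is Some i then x i else 0.

(* second component of the j-th entry of the composable string: y + sum_{k>j} mu(x^k) *)
Definition ystr (p : nat) (xi : gp g h p) (j : nat) : h :=
  xi.2 + \sum_(j.+1 <= k < p) mu (xat xi.1 k).

(* the Lie bracket of g_p, transported from the componentwise bracket of
   composable strings in (g (+)_L h)^p *)
Definition gp_br (p : nat) (xi eta : gp g h p) : gp g h p :=
  ([ffun i : 'I_p => brg (xi.1 i) (eta.1 i) + act (ystr xi i) (eta.1 i)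
                     - act (ystr eta i) (xi.1 i)], brh xi.2 eta.2).

Definition that (p : nat) (xi : gp g h p) : h := xi.2 + \sum_(k < p) mu (xi.1 k).

Definition face (p k : nat) (xi : gp g h p.+1) : gp g h p :=
  ([ffun i : 'I_p => if (i.+1 < k)%N then xat xi.1 i
                     else if i.+1 == k then xat xi.1 i + xat xi.1 i.+1
                     else xat xi.1 i.+1],
   if k == p.+1 then xi.2 + mu (xat xi.1 p) else xi.2).

Variables (V W : lmodType K) (phi : W -> V) (rho00 : h -> V -> V) (rho1 : g -> V -> W).

Definition delta0 (p : nat) (w : seq (gp g h p) -> V) (X : seq (gp g h p)) : V :=
  \sum_(j < size X) (-1) ^+ j *: rho00 (that (nth 0 X j)) (w (rm1 j X))
  + \sum_(m < size X) \sum_(n < size X | (m < n)%N)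
      (-1) ^+ (m + n) *: w (gp_br (nth 0 X m) (nth 0 X n) :: rm2 m n X).

Definition bd (p : nat) (w : seq (gp g h p) -> V) (X : seq (gp g h p.+1)) : V :=
  \sum_(k < p.+2) (-1) ^+ k *: w (map (face k) X).

Definition delta1 (p : nat) (w : seq (gp g h p) -> V) (X : seq (gp g h p)) (x : g) : W :=
  rho1 x (w X).

Definition Delta (p : nat) (b : seq (gp g h p) -> g -> W) (X : seq (gp g h p.+1)) : V :=
  phi (\sum_(j < size X) (-1) ^+ j *: b (map (face 0) (rm1 j X)) ((nth 0 X j).1 ord0)).
End Simplicial.

(* Main.v *)
Require Import Defs.
From HB Require Import structures.
From mathcomp Require Import all_boot all_order all_algebra.
Import Order.TTheory GRing.Theory Num.Theory.
Local Open Scope ring_scope.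
Set Implicit Arguments. Unset Strict Implicit.

Lemma linD (K : fieldType) (U V : lmodType K) (f : U -> V) : lin f -> forall x y, f (x + y) = f x + f y.
Proof. by move=> L x y; have := L 1 x y; rewrite !scale1r. Qed.
Lemma lin0 (K : fieldType) (U V : lmodType K) (f : U -> V) : lin f -> f 0 = 0.
Proof. by move=> L; apply: (@addrI _ (f 0)); rewrite addr0 -(linD L) addr0. Qed.
Lemma linZ (K : fieldType) (U V : lmodType K) (f : U -> V) : lin f -> forall a x, f (a *: x) = a *: f x.
Proof. by move=> L a x; have := L a x 0; rewrite !addr0 (lin0 L) addr0. Qed.
Lemma linN (K : fieldType) (U V : lmodType K) (f : U -> V) : lin f -> forall x, f (- x) = - f x.
Proof. by move=> L x; rewrite -scaleN1r (linZ L) scaleN1r. Qed.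
Lemma linB (K : fieldType) (U V : lmodType K) (f : U -> V) : lin f -> forall x y, f (x - y) = f x - f y.
Proof. by move=> L x y; rewrite (linD L) (linN L). Qed.
Lemma lin_sum (K : fieldType) (U V : lmodType K) (f : U -> V) : lin f ->
  forall (I : Type) (r : seq I) (P : pred I) (F : I -> U),
  f (\sum_(i <- r | P i) F i) = \sum_(i <- r | P i) f (F i).
Proof. move=> L I r P F; exact: (big_morph f (linD L) (lin0 L)). Qed.

Lemma rmP_map (T U : Type) (f : T -> U) (P : pred nat) (s : seq T) i0 :
  [seq x.2 | x <- zip (iota i0 (size s)) (map f s) & P x.1]
  = map f [seq x.2 | x <- zip (iota i0 (size s)) s & P x.1].
Proof.
elim: s i0 => [|a s IH] i0 //=.
by case: (P i0) => /=; rewrite IH.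
Qed.

Lemma rm1_map (T U : Type) (f : T -> U) j s : rm1 j (map f s) = map f (rm1 j s).
Proof. by rewrite /rm1 size_map (rmP_map f (fun k => k != j)). Qed.
Lemma rm2_map (T U : Type) (f : T -> U) m n s : rm2 m n (map f s) = map f (rm2 m n s).
Proof. by rewrite /rm2 size_map (rmP_map f (fun k => (k != m) && (k != n))). Qed.

Lemma xatE (K : fieldType) (g : lmodType K) p (x : {ffun 'I_p -> g}) m (Hm : (m < p)%N) : xat x m = x (Ordinal Hm).
Proof. by rewrite /xat insubT. Qed.
Lemma xat_ord (K : fieldType) (g : lmodType K) p (x : {ffun 'I_p -> g}) (i : 'I_p) : xat x i = x i.
Proof. by rewrite (xatE x (ltn_ord i)); congr (x _); apply: val_inj. Qed.
Lemma xat_out (K : fieldType) (g : lmodType K) p (x : {ffun 'I_p -> g}) m : (p <= m)%N -> xat x m = 0.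
Proof. by move=> H; rewrite /xat insubF // ltnNge H. Qed.
Lemma Ssum (Z : zmodType) (u : nat -> Z) (k p : nat) : (k <= p.+1)%N -> forall i, (i <= p)%N ->
  \sum_(i <= m < p) (if (m.+1 < k)%N then u m else if m.+1 == k then u m + u m.+1 else u m.+1)
  + (if k == p.+1 then u p else 0)
  = if (i < k)%N then \sum_(i <= m < p.+1) u m else \sum_(i.+1 <= m < p.+1) u m.
Proof.
move=> hk i hi; move: {2}(p - i)%N (erefl (p - i)%N) => n; elim: n i hi => [|n IH] i hi hn.
  have -> : i = p by apply/eqP; rewrite eqn_leq hi /= -subn_eq0 hn.
  rewrite big_geq // add0r.
  case: ltnP => hpk.
    have -> : k = p.+1 by apply/eqP; rewrite eqn_leq hk hpk.
    by rewrite eqxx big_nat1.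
  by rewrite big_geq // ifN // neq_ltn ltnS hpk.
have hip : (i < p)%N by rewrite -subn_gt0 hn.
rewrite big_ltn // -addrA IH //; last by rewrite subnS hn.
case: (ltngtP i.+1 k) => h.
- have hi' : (i < p.+1)%N by rewrite ltnS ltnW.
  by rewrite [in RHS](big_ltn hi').
- have hi' : (i.+1 < p.+1)%N by [].
  by rewrite [in RHS](big_ltn hi').
- have hi' : (i < p.+1)%N by rewrite ltnS ltnW.
  have hi2 : (i.+1 < p.+1)%N by [].
  by rewrite [in RHS](big_ltn hi') [in RHS](big_ltn hi2) addrA.
Qed.

Lemma xat_face (K : fieldType) (g h : lmodType K) (mu : g -> h) p k (a : {ffun 'I_p.+1 -> g} * h) m :
  (m < p)%N -> xat (face mu k a).1 m =
   (if (m.+1 < k)%N then xat a.1 m else if m.+1 == k then xat a.1 m + xat a.1 m.+1 else xat a.1 m.+1).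
Proof. by move=> H; rewrite (xatE _ H) ffunE. Qed.

Lemma face2 (K : fieldType) (g h : lmodType K) (mu : g -> h) p k (a : {ffun 'I_p.+1 -> g} * h) :
  (face mu k a).2 = a.2 + (if k == p.+1 then mu (xat a.1 p) else 0).
Proof. by rewrite /face /=; case: eqP; rewrite ?addr0. Qed.

Lemma ystr_face (K : fieldType) (g h : lmodType K) (mu : g -> h) p k (a : {ffun 'I_p.+1 -> g} * h) i :
  lin mu -> (k <= p.+1)%N -> (i < p)%N ->
  ystr mu (face mu k a) i = if (i.+1 < k)%N then ystr mu a i else ystr mu a i.+1.
Proof.
move=> Lm hk hi; rewrite /ystr face2 -addrA [X in _ + X]addrC.
rewrite (eq_big_nat _ _ (F2 := fun m =>
   if (m.+1 < k)%N then mu (xat a.1 m) else if m.+1 == k then mu (xat a.1 m) + mu (xat a.1 m.+1) else mu (xat a.1 m.+1))); last first.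
  move=> m /andP[_ hm]; rewrite xat_face //=; case: ifP => // _; case: ifP => // _.
  exact: linD.
have E := Ssum (fun m => mu (xat a.1 m)) hk hi; simpl in E; rewrite E.
by case: ifP.
Qed.

Lemma that_face (K : fieldType) (g h : lmodType K) (mu : g -> h) p k (a : {ffun 'I_p.+1 -> g} * h) :
  lin mu -> (k <= p.+1)%N ->
  that mu (face mu k a) + (if k == 0%N then mu (a.1 ord0) else 0) = that mu a.
Proof.
move=> Lm hk; rewrite /that face2 -addrA -addrA [X in _ + X]addrC -addrA.
under eq_bigr do rewrite -xat_ord.
rewrite -(big_mkord xpredT (fun m => mu (xat (face mu k a).1 m))).
under [in RHS]eq_bigr do rewrite -xat_ord.
rewrite -(big_mkord xpredT (fun m => mu (xat a.1 m))).
rewrite (eq_big_nat _ _ (F2 := fun m =>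
   if (m.+1 < k)%N then mu (xat a.1 m) else if m.+1 == k then mu (xat a.1 m) + mu (xat a.1 m.+1) else mu (xat a.1 m.+1))); last first.
  move=> m /andP[_ hm]; rewrite xat_face //=; case: ifP => // _; case: ifP => // _.
  exact: linD.
have E := Ssum (fun m => mu (xat a.1 m)) hk (leq0n p); simpl in E.
rewrite (addrC (if k == 0%N then _ else _)) (addrA (\sum_(0 <= i < p) _)) E.
case: k hk E => [|k] hk E /=; last by rewrite addr0.
rewrite [in RHS]big_ltn // addrC.
have -> : xat a.1 0 = a.1 ord0 by rewrite -xat_ord.
by rewrite [RHS]addrC (addrC (mu _)).
Qed.

Lemma lieDl (K : fieldType) (L : lmodType K) (br : L -> L -> L) : is_lie br -> forall x y z, br (x + y) z = br x z + br y z.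
Proof. by case=> H _ _ _ x y z; exact: (linD (H z)). Qed.
Lemma lieDr (K : fieldType) (L : lmodType K) (br : L -> L -> L) : is_lie br -> forall x y z, br z (x + y) = br z x + br z y.
Proof. by case=> _ H _ _ x y z; exact: (linD (H z)). Qed.
Lemma lieC (K : fieldType) (L : lmodType K) (br : L -> L -> L) : is_lie br -> forall x y, br y x = - br x y.
Proof.
move=> HL x y; have [_ _ H0 _] := HL; apply/eqP; rewrite -addr_eq0 addrC.
by have := H0 (x + y); rewrite (lieDl HL) !(lieDr HL) !H0 add0r addr0 => ->.
Qed.

Lemma xat_br (K : fieldType) (g h : lmodType K) (brg : g -> g -> g) (brh : h -> h -> h) (mu : g -> h) (act : h -> g -> g)
  p (a b : {ffun 'I_p -> g} * h) m : (m < p)%N ->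
  xat (gp_br brg brh mu act a b).1 m = brg (xat a.1 m) (xat b.1 m) + act (ystr mu a m) (xat b.1 m) - act (ystr mu b m) (xat a.1 m).
Proof. by move=> H; rewrite !(xatE _ H) ffunE. Qed.

Lemma ystr_S (K : fieldType) (g h : lmodType K) (mu : g -> h) p (a : {ffun 'I_p -> g} * h) i :
  (i.+1 < p)%N -> ystr mu a i = ystr mu a i.+1 + mu (xat a.1 i.+1).
Proof. by move=> H; rewrite /ystr big_ltn // (addrC (mu _)) addrA. Qed.

Lemma face_br (K : fieldType) (g h : lmodType K) (brg : g -> g -> g) (brh : h -> h -> h) (mu : g -> h) (act : h -> g -> g) :
  crossed_module brg brh mu act -> forall p k (a b : {ffun 'I_p.+1 -> g} * h), (k <= p.+1)%N ->
  face mu k (gp_br brg brh mu act a b) = gp_br brg brh mu act (face mu k a) (face mu k b).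
Proof.
move=> CM p k a b hk.
have Lg := cm_lie_g CM; have Lh := cm_lie_h CM; have [Lmu Hmu] := cm_mu CM.
have actDl : forall y y' x, act (y + y') x = act y x + act y' x.
  by move=> y y' x; exact: (linD (cm_act_linh CM x)).
have actDr : forall y x x', act y (x + x') = act y x + act y x'.
  by move=> y x x'; exact: (linD (cm_act_lin CM y)).
congr (_, _); last first.
  rewrite /= /face /=; case: eqP => //= _.
  rewrite xat_br // (linB Lmu) (linD Lmu) Hmu !(cm_equiv CM).
  have -> : ystr mu a p = a.2 by rewrite /ystr big_geq // addr0.
  have -> : ystr mu b p = b.2 by rewrite /ystr big_geq // addr0.
  rewrite !(lieDl Lh) !(lieDr Lh) (lieC Lh (mu _) b.2).
  by rewrite opprK -!addrA; congr (_ + _); rewrite addrC -addrA.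
apply/ffunP => i; rewrite !ffunE.
have hi := ltn_ord i.
rewrite !ystr_face //.
case: (ltngtP i.+1 k) => hik.
- have hi1 : (i < p.+1)%N by apply: ltnW.
  by rewrite xat_br.
- by rewrite xat_br.
have hi1 : (i < p.+1)%N by apply: ltnW.
rewrite !xat_br //.
rewrite (ystr_S _ a) // (ystr_S _ b) //.
set Ya := ystr mu a i.+1; set Yb := ystr mu b i.+1.
rewrite !actDl !(cm_peiffer CM) !(lieDl Lg) !(lieDr Lg) !actDr (lieC Lg (xat a.1 i)).
set A0 := xat a.1 i; set A1 := xat a.1 i.+1; set B0 := xat b.1 i; set B1 := xat b.1 i.+1.
rewrite !opprD !opprK !addrA.
by rewrite [LHS](ACl (1*7*4*8*2*9*3*10*5*11*6*12)).
Qed.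

Lemma delta0_face (K : fieldType) (g h : lmodType K) (brg : g -> g -> g) (brh : h -> h -> h) (mu : g -> h) (act : h -> g -> g)
  (V : lmodType K) (rho00 : h -> V -> V) :
  crossed_module brg brh mu act -> forall p k (w : seq ({ffun 'I_p -> g} * h) -> V) (X : seq ({ffun 'I_p.+1 -> g} * h)),
  (k <= p.+1)%N ->
  delta0 brg brh mu act rho00 w (map (face mu k) X) =
  \sum_(j < size X) (-1) ^+ j *: rho00 (that mu (face mu k (nth 0 X j))) (w (map (face mu k) (rm1 j X)))
  + \sum_(m < size X) \sum_(n < size X | (m < n)%N) (-1) ^+ (m + n) *:
      w (map (face mu k) (gp_br brg brh mu act (nth 0 X m) (nth 0 X n) :: rm2 m n X)).
Proof.
move=> CM p k w X hk; rewrite /delta0 size_map.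
congr (_ + _).
  by apply: eq_bigr => j _; rewrite (nth_map 0) // rm1_map.
apply: eq_bigr => m _; apply: eq_bigr => n _.
by rewrite !(nth_map 0) // rm2_map /= face_br.
Qed.

Theorem mainTheorem9 (K : fieldType) (g h V W : lmodType K)
  (brg : g -> g -> g) (brh : h -> h -> h) (mu : g -> h) (act : h -> g -> g)
  (phi : W -> V) (rho01 : h -> W -> W) (rho00 : h -> V -> V) (rho1 : g -> V -> W) :
  crossed_module brg brh mu act ->
  lin phi ->
  two_rep brg brh mu act phi rho01 rho00 rho1 ->
  forall (p q : nat) (w : seq ({ffun 'I_p -> g} * h) -> V),
  is_cochain q w ->
  forall X : seq ({ffun 'I_p.+1 -> g} * h), size X = q.+1 ->
  delta0 brg brh mu act rho00 (bd mu w) X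
    = bd mu (delta0 brg brh mu act rho00 w) X
      + phi (\sum_(j < q.+1) (-1) ^+ j *:
               rho1 ((nth 0 X j).1 ord0) (w (map (face mu 0) (rm1 j X))))
  /\
  delta0 brg brh mu act rho00 (bd mu w) X
    = bd mu (delta0 brg brh mu act rho00 w) X
      + Delta mu phi (delta1 rho1 w) X.
Proof.
move=> CM Lphi TR p q w _ X HX.
have Lmu := (cm_mu CM).1.
have [_ Lr _] := tr_rho00 TR.
have [Lr2 _ _] := tr_rho00 TR.
have main : delta0 brg brh mu act rho00 (bd mu w) X
    = bd mu (delta0 brg brh mu act rho00 w) X
      + phi (\sum_(j < size X) (-1) ^+ j *:
               rho1 ((nth 0 X j).1 ord0) (w (map (face mu 0) (rm1 j X)))).
  rewrite /bd.
  under [in RHS]eq_bigr => k _ do rewrite (delta0_face rho00 CM w X (ltn_ord k)) scalerDr.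
  rewrite big_split /= /delta0 [RHS]addrAC.
  congr (_ + _).
    have rDl : forall y y' v, rho00 (y + y') v = rho00 y v + rho00 y' v.
      by move=> y y' v; exact: (linD (Lr v)).
    under [in LHS]eq_bigr => j _ do rewrite (lin_sum (Lr2 _)) scaler_sumr.
    rewrite exchange_big /= big_ord_recl [in RHS]big_ord_recl [RHS]addrAC.
    congr (_ + _); last first.
      apply: eq_bigr => k _; rewrite scaler_sumr; apply: eq_bigr => j _.
      rewrite (linZ (Lr2 _)) !scalerA mulrC.
      have E := that_face (k := lift ord0 k) (nth 0 X j) Lmu (ltn_ord _).
      by rewrite /= addr0 in E; rewrite E.
    rewrite expr0 scale1r (lin_sum Lphi) -big_split /=.
    apply: eq_bigr => j _.
    rewrite (linZ (Lr2 _)) scale1r (linZ Lphi) -(tr_mu0 TR) -scalerDr -rDl.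
    have E := that_face (k := 0) (nth 0 X j) Lmu (leq0n _).
    by rewrite /= in E; rewrite E.
  under [in LHS]eq_bigr => m _ do under eq_bigr => n _ do rewrite scaler_sumr.
  under [in LHS]eq_bigr => m _ do rewrite exchange_big.
  rewrite [in LHS]exchange_big.
  apply: eq_bigr => k _; rewrite scaler_sumr; apply: eq_bigr => m _.
  rewrite scaler_sumr; apply: eq_bigr => n _.
  by rewrite !scalerA mulrC.
split; first by rewrite main HX.
by rewrite main /Delta /delta1.
Qed.
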